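(* Let $\Lambda$ be a well-rounded lattice of rank $9$ in a $9$-dimensional Euclidean space $E$, and suppose there is an $8$-dimensional subspace $F\subset E$ such that $\Lambda\cap F$ is similar to the root lattice $\mathsf E_8$ and $\min(\Lambda\cap F)=\min\Lambda$. Then there is no lattice $L\subset E$ with $\min L=\min\Lambda$ and $\Lambda\subsetneq L$.
   Context: For a lattice $\Lambda$, $\min\Lambda=\min_{x\in\Lambda\setminus\{0\}}x\cdot x$; its minimal vectors are those attaining this minimum; $\Lambda$ is well-rounded if its minimal vectors span the ambient space. $\mathsf E_8=\mathsf D_8\cup(\tfrac12(1,\dots,1)+\mathsf D_8)$ where $\mathsf D_8=\{x\in\mathbb Z^8:\sum x_i \text{ even}\}$. *)

(* Defs.v *)
From HB Require Import structures.
From mathcomp Require Import all_boot all_order all_algebra.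
From mathcomp Require Import reals.
Set Implicit Arguments. Unset Strict Implicit. Unset Printing Implicit Defensive.
Import Order.TTheory GRing.Theory Num.Theory.
Local Open Scope ring_scope.

Definition dot (R : realType) (n : nat) (x y : 'rV[R]_n) : R := (x *m y^T) 0 0.

Definition is_lattice (R : realType) (n k : nat) (L : 'rV[R]_n -> Prop) : Prop :=
  exists B : 'M[R]_(k, n), row_free B /\
    forall x, L x <-> exists c : 'rV[int]_k, x = map_mx (fun z : int => z%:~R) c *m B.

Definition is_min (R : realType) (n : nat) (S : 'rV[R]_n -> Prop) (m : R) : Prop :=
  (exists x, S x /\ x != 0 /\ dot x x = m) /\
  (forall x, S x -> x != 0 -> m <= dot x x).

Definition minimal_vector (R : realType) (n : nat) (S : 'rV[R]_n -> Prop) (x : 'rV[R]_n) : Prop :=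
  S x /\ x != 0 /\ (forall y, S y -> y != 0 -> dot x x <= dot y y).

(* well-rounded: the minimal vectors span R^n, i.e. some n minimal vectors
   (rows of M) have full row space *)
Definition well_rounded (R : realType) (n : nat) (S : 'rV[R]_n -> Prop) : Prop :=
  exists M : 'M[R]_n, row_full M /\ forall i, minimal_vector S (row i M).

Definition D8 (R : realType) (x : 'rV[R]_8) : Prop :=
  exists c : 'rV[int]_8, x = map_mx (fun z : int => z%:~R) c /\
    exists s : int, \sum_(i < 8) c 0 i = 2 * s.

Definition E8 (R : realType) (x : 'rV[R]_8) : Prop :=
  D8 x \/ D8 (x - const_mx (1 / 2)).

(* S (a subset of R^9) is similar to E8: there is a similarity
   y |-> y *m A from R^8 into R^9 (A A^T = c I, c > 0) mapping E8 onto S *)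
Definition similar_to_E8 (R : realType) (S : 'rV[R]_9 -> Prop) : Prop :=
  exists (A : 'M[R]_(8, 9)) (c : R), 0 < c /\ A *m A^T = c%:M /\
    forall x, S x <-> exists y, E8 y /\ x = y *m A.

(* Main.v *)
Require Import Defs.
From HB Require Import structures.
From mathcomp Require Import all_boot all_order all_algebra.
From mathcomp Require Import reals.
From mathcomp Require Import zify ring lra.
Set Implicit Arguments. Unset Strict Implicit. Unset Printing Implicit Defensive.
Import Order.TTheory GRing.Theory Num.Theory.
Local Open Scope ring_scope.

Lemma dotE (R : realType) n (x y : 'rV[R]_n) : dot x y = \sum_i x 0 i * y 0 i.
Proof. by rewrite /dot mxE; apply: eq_bigr => i _; rewrite mxE. Qed.

Lemma dotC (R : realType) n (x y : 'rV[R]_n) : dot x y = dot y x.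
Proof. by rewrite !dotE; apply: eq_bigr => i _; rewrite mulrC. Qed.

Lemma dotDl (R : realType) n (x y z : 'rV[R]_n) : dot (x + y) z = dot x z + dot y z.
Proof. by rewrite !dotE -big_split; apply: eq_bigr => i _; rewrite mxE mulrDl. Qed.

Lemma dotNl (R : realType) n (x z : 'rV[R]_n) : dot (- x) z = - dot x z.
Proof. by rewrite !dotE -sumrN; apply: eq_bigr => i _; rewrite mxE mulNr. Qed.

Lemma dotZl (R : realType) n a (x z : 'rV[R]_n) : dot (a *: x) z = a * dot x z.
Proof. by rewrite !dotE mulr_sumr; apply: eq_bigr => i _; rewrite mxE mulrA. Qed.

Lemma dotBl (R : realType) n (x y z : 'rV[R]_n) : dot (x - y) z = dot x z - dot y z.
Proof. by rewrite dotDl dotNl. Qed.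

Lemma dotDr (R : realType) n (x y z : 'rV[R]_n) : dot z (x + y) = dot z x + dot z y.
Proof. by rewrite dotC dotDl !(dotC z). Qed.
Lemma dotBr (R : realType) n (x y z : 'rV[R]_n) : dot z (x - y) = dot z x - dot z y.
Proof. by rewrite dotC dotBl !(dotC z). Qed.
Lemma dotZr (R : realType) n a (x z : 'rV[R]_n) : dot z (a *: x) = a * dot z x.
Proof. by rewrite dotC dotZl dotC. Qed.

Lemma dot_ge0 (R : realType) n (x : 'rV[R]_n) : 0 <= dot x x.
Proof. by rewrite dotE; apply: sumr_ge0 => i _; rewrite -expr2 sqr_ge0. Qed.

Lemma dot_eq0 (R : realType) n (x : 'rV[R]_n) : (dot x x == 0) = (x == 0).
Proof.
apply/idP/idP; last by move/eqP->; rewrite dotE big1 // => i _; rewrite mxE mul0r.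
rewrite dotE psumr_eq0; last by move=> i _; rewrite -expr2 sqr_ge0.
move/allP => H; apply/eqP/matrixP => i j; rewrite mxE (ord1 i).
by have := H j (mem_index_enum j); rewrite mulf_eq0 orbb => /eqP.
Qed.

Lemma dotM (R : realType) n k (x y : 'rV[R]_k) (M : 'M[R]_(k, n)) :
  dot (x *m M) (y *m M) = (x *m (M *m M^T) *m y^T) 0 0.
Proof. by rewrite /dot trmx_mul !mulmxA. Qed.

Lemma lat_sub (R : realType) n k (L : 'rV[R]_n -> Prop) x y :
  is_lattice k L -> L x -> L y -> L (x - y).
Proof.
case=> B [_ HL] /HL [c1 ->] /HL [c2 ->]; apply/HL; exists (c1 - c2).
rewrite -mulmxBl; congr (_ *m _); apply/matrixP => i j; rewrite !mxE.
by rewrite intrB.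
Qed.

Lemma lat_zmul (R : realType) n k (L : 'rV[R]_n -> Prop) x (z : int) :
  is_lattice k L -> L x -> L (z%:~R *: x).
Proof.
case=> B [_ HL] /HL [c1 ->]; apply/HL; exists (z *: c1).
rewrite scalemxAl; congr (_ *m _); apply/matrixP => i j; rewrite !mxE.
by rewrite intrM.
Qed.

Lemma lat_add (R : realType) n k (L : 'rV[R]_n -> Prop) x y :
  is_lattice k L -> L x -> L y -> L (x + y).
Proof.
move=> HL Hx Hy; have := lat_sub HL Hx (lat_zmul (-1) HL Hy).
by rewrite scaleN1r opprK.
Qed.

Lemma int_even_or_odd (z : int) : exists s, z = 2 * s \/ z = 2 * s + 1.
Proof.
exists (z %/ 2)%Z; have := divz_eq z 2; have := modz_ge0 z (isT : (2:int) != 0).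
have := ltz_pmod z (isT : (0:int) < 2); lia.
Qed.

Lemma int_sq_par (c : int) : exists t, c * c = c + 2 * t.
Proof.
have [s [->|->]] := int_even_or_odd c.
  by exists (2 * s * s - s); ring.
by exists (2 * s * s + s); ring.
Qed.

Lemma sum_sq_par (I : finType) (c : I -> int) :
  exists t, \sum_i c i * c i = \sum_i c i + 2 * t.
Proof.
elim/big_rec2: _ => [|i y1 y2 _ [t ->]]; first by exists 0; ring.
by have [t' ->] := int_sq_par (c i); exists (t + t'); ring.
Qed.

Lemma E8_min (R : realType) (y : 'rV[R]_8) : E8 y -> y != 0 -> 2 <= dot y y.
Proof.
case=> [[c [-> [s Hs]]] | [c [Hc _]]] Hy0.
- set v := map_mx _ c in Hy0 *.
  have Hd : dot v v = (\sum_i c 0 i * c 0 i)%:~R.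
    rewrite dotE rmorph_sum; apply: eq_bigr => i _; rewrite !mxE.
    by rewrite rmorphM.
  have [t Ht] := sum_sq_par (fun i => c 0 i).
  rewrite Ht Hs in Hd.
  have : dot v v != 0 by rewrite dot_eq0.
  rewrite Hd => Hne.
  have Hge : (0 : R) <= (2 * s + 2 * t)%:~R by rewrite -Hd dot_ge0.
  have Hne' : (2 * s + 2 * t) != 0 :> int by apply: contra Hne => /eqP ->.
  have Hge' : 0 <= 2 * s + 2 * t :> int by rewrite -(ler_int R).
  rewrite (_ : 2 = (2:int)%:~R) ?ler_int //; lia.
- set v := map_mx _ c in Hc.
  have Hy : y = v + const_mx (1/2) by rewrite -Hc addrNK.
  rewrite Hy dotE.
  apply: (@le_trans _ _ (\sum_(i < 8) (1/4 : R))).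
    by rewrite sumr_const card_ord; rewrite -[_ *+ 8]mulr_natr; lra.
  apply: ler_sum => i _; rewrite !mxE.
  have : 0 <= c 0 i * (c 0 i + 1) :> int by nia.
  rewrite -(ler_int R) intrM intrD => H; lra.
Qed.

Lemma sum_flip (V : comNzRingType) n (f : 'I_n -> V) j d :
  \sum_i (f i + (i == j)%:R * d) = \sum_i f i + d.
Proof.
rewrite big_split /=; congr (_ + _).
rewrite (bigD1 j) //= eqxx mul1r big1 ?addr0 // => i /negbTE ->; by rewrite mul0r.
Qed.

Lemma sumsq_flip (R : realType) n (g : 'I_n -> R) j d :
  \sum_i (g i - (i == j)%:R * d) ^+ 2 = \sum_i g i ^+ 2 - g j ^+ 2 + (g j - d) ^+ 2.
Proof.
rewrite (bigD1 j) //= [in RHS](bigD1 j) //= eqxx mul1r.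
rewrite (eq_bigr (fun i => g i ^+ 2)); first by ring.
by move=> i /negbTE ->; rewrite mul0r subr0.
Qed.

Lemma D8_of (R : realType) (cf : 'I_8 -> int) s :
  \sum_i cf i = 2 * s -> D8 (\row_i ((cf i)%:~R : R)).
Proof.
move=> Hs; exists (\row_i cf i); split.
  by apply/matrixP => i j; rewrite !mxE.
by exists s; rewrite -Hs; apply: eq_bigr => i _; rewrite mxE.
Qed.

Lemma argmax8 (R : realType) (u : 'I_8 -> R) : exists j, forall i, u i <= u j.
Proof.
case: (@arg_maxP _ R _ ord0 xpredT u isT) => j _ H; exists j => i; exact: H.
Qed.

Lemma argmin8 (R : realType) (u : 'I_8 -> R) : exists j, forall i, u j <= u i.
Proof.
case: (@arg_minP _ R _ ord0 xpredT u isT) => j _ H; exists j => i; exact: H.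
Qed.

Lemma E8_cover (R : realType) (z : 'rV[R]_8) :
  exists y, E8 y /\ dot (z - y) (z - y) <= 1.
Proof.
pose a i := Num.floor (z 0 i + 1/2).
pose r i := z 0 i - (a i)%:~R.
have Hr i : -(1/2) <= r i < 1/2.
  have := floor_itv (z 0 i + 1/2); rewrite intrD /r /a => /andP [H1 H2].
  rewrite mulr1z in H2; move: H1 H2; rewrite -/(a i). set t := ((a i)%:~R). move=> H1 H2. rewrite /r -/t. apply/andP; split; lra.
pose u i := `|r i|.
have Hc i : (0 <= r i /\ u i = r i) \/ (r i < 0 /\ u i = - r i).
  case: (lerP 0 (r i)) => H; [left; split => //; exact: ger0_norm |
     right; split => //; exact: ltr0_norm].
have Hu i : 0 <= u i <= 1/2.
  by have := Hr i; case: (Hc i) => [[H ->]|[H ->]] /andP [H1 H2]; apply/andP; split; lra.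
have Hsq i : r i ^+ 2 = u i * u i.
  by case: (Hc i) => [[H ->]|[H ->]]; ring.
pose S := \sum_i u i.
case: (lerP S 2) => HS.
- have [s [Hs|Hs]] := int_even_or_odd (\sum_i a i).
  + exists (\row_i ((a i)%:~R : R)); split; first by left; apply: D8_of Hs.
    rewrite dotE.
    apply: (@le_trans _ _ (\sum_i u i / 2)); last by rewrite -mulr_suml -/S; lra.
    apply: ler_sum => i _; rewrite !mxE -/(r i) -expr2 Hsq.
    by have := Hu i; nra.
  + have [j Hj] := argmax8 u.
    pose d : int := if 0 <= r j then 1 else -1.
    pose cf i := a i + (i == j)%:R * d.
    exists (\row_i ((cf i)%:~R : R)); split.
      left; apply: (@D8_of _ _ (s + if 0 <= r j then 1 else 0)).
      rewrite sum_flip Hs /d; case: ifP => _; lia.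
    rewrite dotE.
    rewrite (eq_bigr (fun i => (r i - (i == j)%:R * (d%:~R)) ^+ 2)); last first.
      move=> i _; rewrite !mxE /cf intrD intrM rmorph_nat /r expr2; ring.
    rewrite sumsq_flip.
    have H1 : \sum_i r i ^+ 2 <= u j * S.
      rewrite /S mulr_sumr; apply: ler_sum => i _; rewrite Hsq.
      by have := Hu i; have := Hj i; nra.
    have Hj2 : (r j - d%:~R) ^+ 2 = (1 - u j) ^+ 2.
      by rewrite /d; case: (Hc j) => [[H ->]|[H ->]]; rewrite ?H;
        [|rewrite ifF; last by apply/negbTE; rewrite -ltNge]; rewrite /= ?mulr0z ?mulrNz ?mulr1z; field; done.
    rewrite Hj2 Hsq.
    have := Hu j; have HS0 : 0 <= S by apply: sumr_ge0 => i _; have := Hu i; lra.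
    nra.
- pose e i : int := if 0 <= r i then 0 else -1.
  pose b i := a i + e i.
  pose w i := r i - (e i)%:~R - 1/2.
  have Hw i : w i ^+ 2 = (1/2 - u i) ^+ 2.
    rewrite /w /e; case: (Hc i) => [[H ->]|[H ->]]; rewrite ?H;
        [|rewrite ifF; last by apply/negbTE; rewrite -ltNge]; rewrite /=; rewrite /= ?mulr0z ?mulrNz ?mulr1z; field; done.
  have HS4 : \sum_i (1/2 - u i) = 4 - S.
    rewrite sumrB sumr_const card_ord /S -[_ *+ 8]mulr_natr; lra.
  have [s [Hs|Hs]] := int_even_or_odd (\sum_i b i).
  + exists (\row_i (((b i)%:~R : R) + 1/2)); split.
      right; suff -> : \row_i (((b i)%:~R : R) + 1/2) - const_mx (1/2) = \row_i ((b i)%:~R : R).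
        exact: D8_of Hs.
      by apply/matrixP => i j; rewrite !mxE addrK.
    rewrite dotE.
    rewrite (eq_bigr (fun i => w i ^+ 2)); last first.
      move=> i _; rewrite !mxE /w /b /r intrD expr2; ring.
    apply: (@le_trans _ _ (\sum_i (1/2 - u i) / 2)); last by rewrite -mulr_suml HS4; lra.
    apply: ler_sum => i _; rewrite Hw.
    by have := Hu i; nra.
  + have [k Hk] := argmin8 u.
    pose d : int := if 0 <= r k then -1 else 1.
    pose cf i := b i + (i == k)%:R * d.
    exists (\row_i (((cf i)%:~R : R) + 1/2)); split.
      right; suff -> : \row_i (((cf i)%:~R : R) + 1/2) - const_mx (1/2) = \row_i ((cf i)%:~R : R).
        apply: (@D8_of _ _ (s + if 0 <= r k then 0 else 1)).
        rewrite sum_flip Hs /d; case: ifP => _; lia.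
      by apply/matrixP => i j; rewrite !mxE addrK.
    rewrite dotE.
    rewrite (eq_bigr (fun i => (w i - (i == k)%:R * (d%:~R)) ^+ 2)); last first.
      move=> i _; rewrite !mxE /cf /w /b /r !intrD intrM rmorph_nat expr2; ring.
    rewrite sumsq_flip.
    have H1 : \sum_i w i ^+ 2 <= (1/2 - u k) * (4 - S).
      rewrite -HS4 mulr_sumr; apply: ler_sum => i _; rewrite Hw.
      by have := Hu i; have := Hu k; have := Hk i; nra.
    have Hk2 : (w k - d%:~R) ^+ 2 = (1/2 + u k) ^+ 2.
      rewrite /d /w /e; case: (Hc k) => [[H ->]|[H ->]]; rewrite ?H;
        [|rewrite !ifF; try by apply/negbTE; rewrite -ltNge]; rewrite /= ?mulr0z ?mulrNz ?mulr1z; field; done.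
    rewrite Hk2 Hw.
    have := Hu k; nra.
Qed.


Definition projP (R : realType) (c : R) (A : 'M[R]_(8, 9)) : 'M[R]_9 :=
  c^-1 *: (A^T *m A).

Lemma projP_A (R : realType) (c : R) (A : 'M[R]_(8, 9)) :
  0 < c -> A *m A^T = c%:M -> A *m projP c A = A.
Proof.
move=> hc hA; rewrite /projP -scalemxAr mulmxA hA mul_scalar_mx scalerA.
by rewrite mulVf ?scale1r // gt_eqF.
Qed.

Lemma projP_tr (R : realType) (c : R) (A : 'M[R]_(8, 9)) :
  (projP c A)^T = projP c A.
Proof.
apply/matrixP => i j; rewrite /projP !mxE; congr (_ * _).
by apply: eq_bigr => k _; rewrite !mxE mulrC.
Qed.

Lemma projP_idem (R : realType) (c : R) (A : 'M[R]_(8, 9)) :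
  0 < c -> A *m A^T = c%:M -> projP c A *m projP c A = projP c A.
Proof.
move=> hc hA; rewrite {1}/projP -scalemxAl -mulmxA projP_A //.
Qed.

Lemma projP_orth (R : realType) (c : R) (A : 'M[R]_(8, 9)) :
  0 < c -> A *m A^T = c%:M -> projP c A *m (1%:M - projP c A)^T = 0.
Proof.
move=> hc hA; rewrite linearB /= trmx1 projP_tr mulmxBr mulmx1 projP_idem //.
by rewrite subrr.
Qed.

Lemma dot_decomp (R : realType) (c : R) (A : 'M[R]_(8, 9)) (w : 'rV[R]_9) :
  0 < c -> A *m A^T = c%:M ->
  dot w w = dot (w *m projP c A) (w *m projP c A) +
            dot (w *m (1%:M - projP c A)) (w *m (1%:M - projP c A)).
Proof.
move=> hc hA.
set P := projP c A; set Q := 1%:M - P.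
have Hw : w = w *m P + w *m Q by rewrite /Q mulmxBr mulmx1 addrC subrK.
have H0 : dot (w *m P) (w *m Q) = 0.
  by rewrite /dot trmx_mul mulmxA -(mulmxA w) projP_orth // mulmx0 mul0mx mxE.
rewrite {1 2}Hw dotDl !dotDr H0 (dotC (w *m Q)) H0; ring.
Qed.

Lemma dot_A (R : realType) (c : R) (A : 'M[R]_(8, 9)) (y : 'rV[R]_8) :
  A *m A^T = c%:M -> dot (y *m A) (y *m A) = c * dot y y.
Proof.
by move=> hA; rewrite dotM hA mul_mx_scalar -scalemxAl mxE.
Qed.

Lemma rankA8 (R : realType) (c : R) (A : 'M[R]_(8, 9)) :
  0 < c -> A *m A^T = c%:M -> \rank A = 8%N.
Proof.
move=> hc hA; apply/eqP; rewrite eqn_leq rank_leq_row /=.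
apply: (mulmx1_min_rank (M := (c^-1)%:M) (N := A^T)).
by rewrite -mulmxA hA -scalar_mxM mulVf // gt_eqF.
Qed.

Lemma rankP8 (R : realType) (c : R) (A : 'M[R]_(8, 9)) :
  0 < c -> A *m A^T = c%:M -> \rank (projP c A) = 8%N.
Proof.
move=> hc hA; apply/eqP; rewrite eqn_leq; apply/andP; split.
  rewrite /projP scalemxAl; apply: leq_trans (mxrankM_maxr _ _) _.
  exact: rank_leq_row.
by rewrite -{1}(rankA8 hc hA) -{1}(projP_A hc hA) mxrankM_maxr.
Qed.

Lemma rankQ1 (R : realType) (c : R) (A : 'M[R]_(8, 9)) :
  0 < c -> A *m A^T = c%:M -> (\rank (1%:M - projP c A)%R <= 1)%N.
Proof.
move=> hc hA.
have H := mxrank_mul_min (projP c A) (1%:M - projP c A).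
rewrite mulmxBr mulmx1 projP_idem // subrr mxrank0 rankP8 // in H.
lia.
Qed.

Lemma oneD (R : realType) (c : R) (A : 'M[R]_(8, 9)) (w v : 'rV[R]_9) :
  0 < c -> A *m A^T = c%:M -> v *m (1%:M - projP c A) != 0 ->
  exists s, w *m (1%:M - projP c A) = s *: (v *m (1%:M - projP c A)).
Proof.
move=> hc hA hv.
set Q := 1%:M - projP c A.
have Hsub : (v *m Q <= Q)%MS by apply: submxMl.
have Hr : (\rank Q <= \rank (v *m Q))%N.
  apply: leq_trans (rankQ1 hc hA) _.
  by rewrite lt0n mxrank_eq0.
have HQ : (Q <= v *m Q)%MS.
  by rewrite -(mxrank_leqif_sup Hsub).2 eqn_leq Hr mxrankS.
by apply/sub_rVP; apply: submx_trans HQ; apply: submxMl.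
Qed.

Theorem lemma3p3 (R : realType) (Lam : 'rV[R]_9 -> Prop) (F : 'M[R]_9) (m : R) :
  is_lattice 9 Lam -> well_rounded Lam ->
  \rank F = 8%N ->
  similar_to_E8 (fun x => Lam x /\ (x <= F)%MS) ->
  is_min (fun x => Lam x /\ (x <= F)%MS) m -> is_min Lam m ->
  ~ exists (k : nat) (L : 'rV[R]_9 -> Prop),
      is_lattice k L /\ is_min L m /\
      (forall x, Lam x -> L x) /\ (exists x, L x /\ ~ Lam x).
Proof.
move=> HLam [M [HMf HMmin]] _ [A [c [hc [hA Hsim]]]]
  [[x0 [[Hx0L Hx0F] [Hx00 Hx0m]]] _] [[x1 [Hx1 [Hx10 Hx1m]]] _]
  [kk [L [HL [[_ HminL] [HsubL [x [HLx HnLx]]]]]]].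
set P := projP c A; set Q := 1%:M - P.
have Hm2c : 2 * c <= m.
  have [y0 [HE Hy0]] := (Hsim x0).1 (conj Hx0L Hx0F).
  have Hy0nz : y0 != 0.
    by apply: contra Hx00; rewrite Hy0 => /eqP ->; rewrite mul0mx.
  rewrite -Hx0m Hy0 (dot_A _ hA).
  have := E8_min HE Hy0nz; nra.
have [i Hi] : exists i, row i M *m Q != 0.
  case: (pickP (fun i => row i M *m Q != 0)) => [i Hi|H0]; first by exists i.
  have HMQ : M *m Q = 0.
    apply/row_matrixP => i; rewrite row_mul row0.
    by have := H0 i; move/negbFE/eqP.
  have HQ0 : Q = 0.
    move: HMf; rewrite row_full_unit => HMu.
    by rewrite -(mulKmx HMu Q) HMQ mulmx0.
  have : P = 1%:M by apply/eqP; rewrite eq_sym -subr_eq0 -/Q HQ0.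
  move=> HP; have := rankP8 hc hA; rewrite -/P HP mxrank1 //.
set v := row i M.
have [HvL [Hv0 Hvmin]] := HMmin i.
have Hvm : dot v v <= m by rewrite -Hx1m; apply: Hvmin.
have Hqv : dot (v *m Q) (v *m Q) <= m.
  have := dot_decomp v hc hA; rewrite -/P -/Q => Hd.
  have := dot_ge0 (v *m P); lra.
have [s Hs] := oneD x hc hA Hi.
rewrite -/P -/Q in Hs.
set k := Num.floor (s + 1/2).
have Hk : -(1/2) <= s - k%:~R < 1/2.
  have := floor_itv (s + 1/2); rewrite intrD -/k mulr1z.
  move=> /andP [H1 H2]; apply/andP; split; lra.
set x' := x - k%:~R *: v.
set zz := c^-1 *: (x' *m A^T).
have [y [HEy Hy]] := E8_cover zz.
have HLamyA : Lam (y *m A) := ((Hsim _).2 (ex_intro _ y (conj HEy erefl))).1.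
set x'' := x' - y *m A.
have HLx'' : L x'' :=
  lat_sub HL (lat_sub HL HLx (lat_zmul k HL (HsubL _ HvL))) (HsubL _ HLamyA).
have HAP : A *m P = A by apply: projP_A.
have HP'' : x'' *m P = (zz - y) *m A.
  rewrite /x'' mulmxBl -mulmxA HAP [RHS]mulmxBl; congr (_ - _).
  by rewrite /zz /P /projP -scalemxAl -scalemxAr mulmxA.
have HQ'' : x'' *m Q = (s - k%:~R) *: (v *m Q).
  have HyQ : y *m A *m Q = 0 by rewrite /Q mulmxBr mulmx1 -mulmxA HAP subrr.
  by rewrite /x'' /x' !mulmxBl Hs -scalemxAl HyQ subr0 scalerBl.
have Hnorm : dot x'' x'' <= c + m / 4.
  rewrite (dot_decomp x'' hc hA) -/P -/Q HP'' HQ'' (dot_A _ hA) dotZl dotZr.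
  have := dot_ge0 (v *m Q); move: Hk => /andP [Hk1 Hk2].
  move: (dot (zz - y) (zz - y)) Hy (dot (v *m Q) (v *m Q)) Hqv (s - k%:~R) Hk1 Hk2.
  move=> D HD q Hq t Ht1 Ht2 Hq0.
  have Ht : t * t <= 1/4 by nra.
  have H1 : c * D <= c by nra.
  have H2 : t * (t * q) <= q / 4 by nra.
  lra.
have Hx''0 : x'' = 0.
  have [//|H] := eqVneq x'' (0 : 'rV[R]_9); have := HminL _ HLx'' H; move: Hnorm.
  move: (dot x'' x'') => d H1 H2; exfalso; lra.
apply: HnLx.
have -> : x = y *m A + k%:~R *: v.
  by move/eqP: Hx''0; rewrite /x'' /x' subr_eq0 subr_eq => /eqP.
exact: lat_add HLam HLamyA (lat_zmul k HLam HvL).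
Qed.
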